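(* For $k\geq 1$ let $p(k)$ be the probability that two independent uniformly random permutations $\sigma,\sigma'\in S_{2k}$, each of cycle type $(2^k)$ (i.e. fixed-point-free involutions), generate a transitive subgroup of $S_{2k}$. Then $p(k)\asymp k^{-1/2}$, i.e. there are absolute constants $0<a<b$ with $a k^{-1/2}\leq p(k)\leq b k^{-1/2}$ for all $k\geq 1$. *)

(* Defs.v *)
From HB Require Import structures.
From mathcomp Require Import all_boot all_order all_algebra all_fingroup.
Set Implicit Arguments. Unset Strict Implicit. Unset Printing Implicit Defensive.
Import Order.TTheory GRing.Theory Num.Theory.

Definition fpf_involution n (s : 'S_n) : bool :=
  (s * s == 1)%g && [forall i, s i != i].

Definition fpf_pairs k : {set 'S_(k.*2) * 'S_(k.*2)} :=
  [set x | fpf_involution x.1 && fpf_involution x.2].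

Definition transitive_fpf_pairs k : {set 'S_(k.*2) * 'S_(k.*2)} :=
  [set x in fpf_pairs k |
     [transitive <<[set x.1; x.2]>>%g, on [set: 'I_(k.*2)] | 'P]].

Definition p_trans (R : numFieldType) (k : nat) : R :=
  (#|transitive_fpf_pairs k|%:R / #|fpf_pairs k|%:R)%R.

(* Main.v *)
Require Import Defs.
From mathcomp Require Import all_boot all_order all_algebra all_fingroup zify ring lra.
Set Implicit Arguments. Unset Strict Implicit. Unset Printing Implicit Defensive.


Section Gen.
Local Open Scope group_scope.
Variable T : finType.
Implicit Types (A B : {set T}) (s t : {perm T}).

Lemma card_bij (T1 T2 : finType) (X : {set T1}) (Y : {set T2}) f g :
  {in X, forall x, f x \in Y} -> {in Y, forall y, g y \in X} ->
  {in X, cancel f g} -> {in Y, cancel g f} -> #|X| = #|Y|.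
Proof.
move=> fXY gYX fK gK; apply/eqP; rewrite eqn_leq; apply/andP; split.
  rewrite -(card_in_imset (f:=f)); last exact: can_in_inj fK.
  by apply: subset_leq_card; apply/subsetP=> y /imsetP[x Xx ->]; apply: fXY.
rewrite -(card_in_imset (f:=g)); last exact: can_in_inj gK.
by apply: subset_leq_card; apply/subsetP=> y /imsetP[x Xx ->]; apply: gYX.
Qed.

Definition inv_on A s : bool :=
  [forall x, (s (s x) == x) && ((s x == x) == (x \notin A))].

Lemma inv_onP A s : reflect ((forall x, s (s x) = x) /\ (forall x, (s x == x) = (x \notin A))) (inv_on A s).
Proof.
apply: (iffP forallP) => [H | [H1 H2] x].
  by split=> x; have /andP[/eqP ? /eqP ?] := H x.
by rewrite H1 H2 !eqxx.
Qed.

Definition closedB s t B := [forall x in B, (s x \in B) && (t x \in B)].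
Definition conn A s t := [forall B : {set T},
  [&& B \subset A, B != set0 & closedB s t B] ==> (B == A)].

Lemma trans_conn s t (x0 : T) : (forall x, s (s x) = x) -> (forall x, t (t x) = x) ->
  [transitive <<[set s; t]>>, on [set: T] | 'P] = conn setT s t.
Proof.
move=> ss tt; apply/idP/idP.
  move=> tr; apply/forallP=> B; apply/implyP=> /and3P[_ /set0Pn[x Bx] /forallP cl].
  have NB : <<[set s; t]>> \subset 'N(B | 'P).
    rewrite gen_subG; apply/subsetP=> g; rewrite !inE => /orP[]/eqP->.
    + by apply/subsetP=> y By; rewrite inE /= apermE; have /andP[] := implyP (cl y) By.
    + by apply/subsetP=> y By; rewrite inE /= apermE; have /andP[] := implyP (cl y) By.
  have := atransPin (subsetT _) tr (in_setT x) => orb.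
  apply/eqP/setP=> y; rewrite in_setT.
  have : y \in orbit 'P <<[set s; t]>> x by rewrite orb in_setT.
  case/orbitP=> g Gg <-; rewrite (astabs_act _ (subsetP NB _ Gg)) //.
move=> /forallP /(_ (orbit 'P <<[set s; t]>> x0)) /implyP H.
apply/imsetP; exists x0 => //; apply/esym/eqP/H.
rewrite subsetT /=; apply/andP; split.
  by apply/set0Pn; exists x0; apply: orbit_refl.
apply/forallP=> y; apply/implyP=> /orbitP[g Gg <-].
rewrite -!apermE -!actM /= !mem_orbit // groupM // mem_gen // !inE eqxx ?orbT //.
Qed.
End Gen.


Section S2.
Variable T : finType.
Local Open Scope group_scope.
Implicit Types (A B : {set T}) (s t : {perm T}).

Lemma inv_on_in A s x : inv_on A s -> (s x \in A) = (x \in A).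
Proof.
case/inv_onP=> ss sf; apply/idP/idP=> H; apply: contraTT H.
  move=> h; have /eqP e : s x == x by rewrite sf.
  by rewrite e.
move=> h; have /eqP e : s (s x) == s x by rewrite sf.
by rewrite -(ss x) e.
Qed.

Lemma inv_on_fix A s x : inv_on A s -> x \notin A -> s x = x.
Proof. by case/inv_onP=> _ sf; rewrite -sf => /eqP. Qed.

Lemma inv_on_nfix A s x : inv_on A s -> x \in A -> s x != x.
Proof. by case/inv_onP=> _ sf; rewrite sf => ->. Qed.

Lemma contr_s A s a : inv_on A s -> a \in A ->
  [/\ inv_on (A :\ a :\ s a) (s * tperm a (s a)), (s * tperm a (s a)) a = a,
     (s * tperm a (s a)) (s a) = s a &
     forall x, x != a -> x != s a -> (s * tperm a (s a)) x = s x].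
Proof.
move=> sA aA; have [ss sf] := inv_onP _ _ sA.
set b := s a.
have ab : a != b by rewrite eq_sym (inv_on_nfix sA).
have sb : s b = a by rewrite ss.
have gen x : x != a -> x != b -> (s x != a) && (s x != b).
  move=> xa xb; apply/andP; split.
    by apply: contra xb => /eqP e; rewrite /b -e ss.
  by apply: contra xa => /eqP /perm_inj ->.
have ev x : x != a -> x != b -> (s * tperm a b) x = s x.
  by move=> xa xb; have /andP[h1 h2] := gen x xa xb; rewrite permM tpermD // eq_sym.
have eva : (s * tperm a b) a = a by rewrite permM tpermR.
have evb : (s * tperm a b) b = b by rewrite permM sb tpermL.
split=> //; apply/inv_onP; split=> x.
  case: (eqVneq x a) => [->|xa]; first by rewrite !eva.
  case: (eqVneq x b) => [->|xb]; first by rewrite !evb.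
  have /andP[h1 h2] := gen x xa xb.
  by rewrite !ev // ss.
rewrite !inE.
case: (eqVneq x a) => [->|xa]; first by rewrite eva !eqxx /= ?andbF.
case: (eqVneq x b) => [->|xb]; first by rewrite evb !eqxx /= ?andbF.
by rewrite ev // sf.
Qed.

Lemma uncontr_s A s a b : inv_on (A :\ a :\ b) s -> a \in A -> b \in A -> a != b ->
  inv_on A (s * tperm a b) /\ (s * tperm a b) a = b.
Proof.
move=> sA aA bA ab; have [ss sf] := inv_onP _ _ sA.
have sa : s a = a by rewrite (inv_on_fix sA) // !inE !eqxx /= ?andbF.
have sb : s b = b by rewrite (inv_on_fix sA) // !inE !eqxx /= ?andbF.
have gen x : x != a -> x != b -> (s x != a) && (s x != b).
  move=> xa xb; apply/andP; split.
    by apply: contra xa => /eqP e; rewrite -sa in e; rewrite (perm_inj e).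
  by apply: contra xb => /eqP e; rewrite -sb in e; rewrite (perm_inj e).
have ev x : x != a -> x != b -> (s * tperm a b) x = s x.
  by move=> xa xb; have /andP[h1 h2] := gen x xa xb; rewrite permM tpermD // eq_sym.
have eva : (s * tperm a b) a = b by rewrite permM sa tpermL.
have evb : (s * tperm a b) b = a by rewrite permM sb tpermR.
split=> //; apply/inv_onP; split=> x.
  case: (eqVneq x a) => [->|xa]; first by rewrite eva evb.
  case: (eqVneq x b) => [->|xb]; first by rewrite evb eva.
  have /andP[h1 h2] := gen x xa xb.
  by rewrite !ev // ss.
case: (eqVneq x a) => [->|xa]; first by rewrite eva aA eq_sym (negbTE ab).
case: (eqVneq x b) => [->|xb]; first by rewrite evb bA (negbTE ab).
by rewrite ev // sf !inE xa xb.
Qed.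

End S2.


Section S3.

Variable T : finType.
Local Open Scope group_scope.
Implicit Types (A B : {set T}) (s t : {perm T}).

Lemma tpermE' (x y z : T) : tperm x y z = if z == x then y else if z == y then x else z.
Proof.
case: tpermP => [->|->|zx zy]; first by rewrite eqxx.
  by case: eqP => [->|_] //; rewrite eqxx.
by move/eqP/negbTE: zx => ->; move/eqP/negbTE: zy => ->.
Qed.

Definition tcon t a b := t * tperm a (t a) * tperm b (t b) * tperm (t a) (t b).
Definition tun t a b c := t * tperm c (t c) * tperm b (t c) * tperm a c.

Lemma tun_tcon t a b : tcon t a b (t a) = t b -> tun (tcon t a b) a b (t a) = t.
Proof.
move=> e; rewrite /tun e /tcon.
by apply/permP=> x; rewrite !permM !tpermK.
Qed.

Lemma tcon_tun t a b c : tun t a b c a = c -> tun t a b c b = t c -> tcon (tun t a b c) a b = t.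
Proof.
move=> e1 e2; rewrite /tcon e1 e2 /tun.
by apply/permP=> x; rewrite !permM !tpermK.
Qed.


Lemma neqF (x y : T) : x != y -> ((x == y) = false) * ((y == x) = false).
Proof. by move=> h; rewrite (negbTE h) eq_sym (negbTE h). Qed.

Lemma contr_t A t a b : inv_on A t -> a \in A -> b \in A -> a != b -> t a != b ->
  [/\ inv_on (A :\ a :\ b) (tcon t a b), tcon t a b (t a) = t b, t a \in A :\ a :\ b &
     [/\ tcon t a b a = a, tcon t a b b = b, tcon t a b (t b) = t a &
     forall x, x != a -> x != b -> x != t a -> x != t b -> tcon t a b x = t x]].
Proof.
move=> tA aA bA ab; have [tt tf] := inv_onP _ _ tA.
rewrite /tcon; move Ec: (t a) => c; move Ed: (t b) => d => cb.
have ca : c != a by rewrite -Ec; apply: inv_on_nfix tA aA.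
have db : d != b by rewrite -Ed; apply: inv_on_nfix tA bA.
have tc : t c = a by rewrite -Ec tt.
have td : t d = b by rewrite -Ed tt.
have da : d != a by apply: contra cb => /eqP e; rewrite -Ec -e td.
have cd : c != d by apply: contra ab => /eqP e; rewrite -tc e td.
have cA : c \in A by rewrite -Ec (inv_on_in _ tA).
have dA : d \in A by rewrite -Ed (inv_on_in _ tA).
have F := (neqF ab, neqF ca, neqF db, neqF da, neqF cd, neqF cb).
set u := t * _ * _ * _.
have ua : u a = a by rewrite /u !permM !tpermE' Ec ; do 6 (rewrite ?eqxx ?F /=).
have ub : u b = b by rewrite /u !permM !tpermE' Ed; do 6 (rewrite ?eqxx ?F /=).
have uc : u c = d by rewrite /u !permM !tpermE' tc ; do 6 (rewrite ?eqxx ?F /=).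
have ud : u d = c by rewrite /u !permM !tpermE' td ; do 6 (rewrite ?eqxx ?F /=).
have ux x : x != a -> x != b -> x != c -> x != d -> (u x = t x) /\ (t x != a) /\ (t x != b) /\ (t x != c) /\ (t x != d).
  move=> xa xb xc xd.
  have h1 : t x != a by apply: contra xc => /eqP e; rewrite -Ec -e tt.
  have h2 : t x != b by apply: contra xd => /eqP e; rewrite -Ed -e tt.
  have h3 : t x != c by apply: contra xa => /eqP e; rewrite -tc -e tt.
  have h4 : t x != d by apply: contra xb => /eqP e; rewrite -td -e tt.
  have G := (neqF h1, neqF h2, neqF h3, neqF h4).
  by rewrite /u !permM !tpermE'; do 6 (rewrite ?eqxx ?G /=).
have cA' : c \in A :\ a :\ b by rewrite !inE cb ca cA.
split=> //; last first.
  by split=> // x xa xb xc xd; case: (ux x xa xb xc xd).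
apply/inv_onP; split=> x.
  case: (eqVneq x a) => [->|xa]; first by rewrite !ua.
  case: (eqVneq x b) => [->|xb]; first by rewrite !ub.
  case: (eqVneq x c) => [->|xc]; first by rewrite uc ud.
  case: (eqVneq x d) => [->|xd]; first by rewrite ud uc.
  have [e [h1 [h2 [h3 h4]]]] := ux x xa xb xc xd.
  have [e' _] := ux (t x) h1 h2 h3 h4.
  by rewrite e e' tt.
rewrite !inE.
case: (eqVneq x a) => [->|xa]; first by rewrite ua !eqxx /= ?andbF.
case: (eqVneq x b) => [->|xb]; first by rewrite ub !eqxx /= ?andbF.
case: (eqVneq x c) => [->|xc]; first by rewrite uc ?F cA.
case: (eqVneq x d) => [->|xd]; first by rewrite ud ?F dA.
have [e _] := ux x xa xb xc xd.
by rewrite e tf.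
Qed.

Lemma uncontr_t A t a b c : inv_on (A :\ a :\ b) t -> a \in A -> b \in A -> a != b ->
  c \in A :\ a :\ b ->
  [/\ inv_on A (tun t a b c), tun t a b c a = c, tun t a b c b = t c & c != b].
Proof.
move=> tA aA bA ab cA'; have [tt tf] := inv_onP _ _ tA.
have ta : t a = a by rewrite (inv_on_fix tA) // !inE !eqxx /= ?andbF.
have tb : t b = b by rewrite (inv_on_fix tA) // !inE !eqxx /= ?andbF.
move: (cA'); rewrite !inE => /and3P[cb ca cA].
have dA' : t c \in A :\ a :\ b by rewrite (inv_on_in _ tA).
have dc : t c != c by apply: inv_on_nfix tA cA'.
rewrite /tun; move: dA' dc; move Ed: (t c) => d dA' dc.
move: (dA'); rewrite !inE => /and3P[db da dA].
have td : t d = c by rewrite -Ed tt.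
have F := (neqF ab, neqF ca, neqF db, neqF da, neqF dc, neqF cb).
set u := t * _ * _ * _.
have ua : u a = c by rewrite /u !permM !tpermE' ta ; do 6 (rewrite ?eqxx ?F /=).
have ub : u b = d by rewrite /u !permM !tpermE' tb; do 6 (rewrite ?eqxx ?F /=).
have uc : u c = a by rewrite /u !permM !tpermE' Ed ; do 6 (rewrite ?eqxx ?F /=).
have ud : u d = b by rewrite /u !permM !tpermE' td ; do 6 (rewrite ?eqxx ?F /=).
have ux x : x != a -> x != b -> x != c -> x != d -> (u x = t x) /\ (t x != a) /\ (t x != b) /\ (t x != c) /\ (t x != d).
  move=> xa xb xc xd.
  have h1 : t x != a by apply: contra xa => /eqP e; rewrite -ta -e tt.
  have h2 : t x != b by apply: contra xb => /eqP e; rewrite -tb -e tt.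
  have h3 : t x != c by apply: contra xd => /eqP e; rewrite -Ed -e tt.
  have h4 : t x != d by apply: contra xc => /eqP e; rewrite -td -e tt.
  have G := (neqF h1, neqF h2, neqF h3, neqF h4).
  by rewrite /u !permM !tpermE'; do 6 (rewrite ?eqxx ?G /=).
split=> //; apply/inv_onP; split=> x.
  case: (eqVneq x a) => [->|xa]; first by rewrite ua uc.
  case: (eqVneq x b) => [->|xb]; first by rewrite ub ud.
  case: (eqVneq x c) => [->|xc]; first by rewrite uc ua.
  case: (eqVneq x d) => [->|xd]; first by rewrite ud ub.
  have [e [h1 [h2 [h3 h4]]]] := ux x xa xb xc xd.
  have [e' _] := ux (t x) h1 h2 h3 h4.
  by rewrite e e' tt.
case: (eqVneq x a) => [->|xa]; first by rewrite ua ?F aA.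
case: (eqVneq x b) => [->|xb]; first by rewrite ub ?F bA.
case: (eqVneq x c) => [->|xc]; first by rewrite uc ?F cA.
case: (eqVneq x d) => [->|xd]; first by rewrite ud ?F dA.
have [e _] := ux x xa xb xc xd.
by rewrite e tf !inE xa xb.
Qed.

End S3.


Section S4.
Variable T : finType.
Local Open Scope group_scope.
Implicit Types (A B : {set T}) (s t : {perm T}).

Lemma closedP s t B : reflect (forall x, x \in B -> s x \in B /\ t x \in B) (closedB s t B).
Proof.
apply: (iffP forallP) => [H x xB | H x]; first by have /andP[] := implyP (H x) xB.
by apply/implyP=> xB; have [-> ->] := H x xB.
Qed.

Lemma connP A s t : reflect (forall B, B \subset A -> B != set0 -> closedB s t B -> B = A) (conn A s t).
Proof.
apply: (iffP forallP) => [H B sBA nB cB | H B].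
  by apply/eqP; apply: (implyP (H B)); rewrite sBA nB cB.
by apply/implyP=> /and3P[sBA nB cB]; rewrite (H B).
Qed.

Lemma conn_contr A s t s' t' a b c d :
  inv_on A s -> inv_on A t -> inv_on (A :\ a :\ b) s' -> inv_on (A :\ a :\ b) t' ->
  a \in A -> s a = b -> t a = c -> t b = d -> c != b ->
  s' a = a -> s' b = b -> (forall x, x != a -> x != b -> s' x = s x) ->
  t' a = a -> t' b = b -> t' c = d -> t' d = c ->
  (forall x, x != a -> x != b -> x != c -> x != d -> t' x = t x) ->
  conn A s t = conn (A :\ a :\ b) s' t'.
Proof.
move=> sA tA sA' tA' aA sa ta tb cb s'a s'b s'x t'a t'b t'c t'd t'x.
have [ss sf] := inv_onP _ _ sA; have [tt tf] := inv_onP _ _ tA.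
have ab : a != b by rewrite -sa eq_sym (inv_on_nfix sA).
have bA : b \in A by rewrite -sa (inv_on_in _ sA).
have sb : s b = a by rewrite -sa ss.
have tc : t c = a by rewrite -ta tt.
have td : t d = b by rewrite -tb tt.
have ca : c != a by rewrite -ta (inv_on_nfix tA).
have db : d != b by rewrite -tb (inv_on_nfix tA).
have da : d != a by apply: contra cb => /eqP e; rewrite -ta -e td.
have cd : c != d by apply: contra ab => /eqP e; rewrite -tc e td.
have cA : c \in A by rewrite -ta (inv_on_in _ tA).
have dA : d \in A by rewrite -tb (inv_on_in _ tA).
have cA' : c \in A :\ a :\ b by rewrite !inE cb ca cA.
have dA' : d \in A :\ a :\ b by rewrite !inE db da dA.
apply/connP/connP => H B sB nB /closedP cl.
-
  have xab x : x \in B -> [/\ x != a, x != b & x \in A].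
    by move/(subsetP sB); rewrite !inE => /and3P[].
  have aB : a \notin B by apply/negP=> /xab[]; rewrite eqxx.
  have bB : b \notin B by apply/negP=> /xab[]; rewrite eqxx.
  have dBc : (d \in B) = (c \in B).
    apply/idP/idP => h; first by rewrite -t'd; case: (cl _ h).
    by rewrite -t'c; case: (cl _ h).
  have clst x : x \in B -> (s x = s' x) /\ (x != c -> x != d -> t x = t' x).
    by case/xab=> xa xb _; split=> [|xc xd]; rewrite ?s'x ?t'x.
  case cB: (c \in B).
    have e := H (a |: (b |: B)).
    have /e eA : a |: (b |: B) \subset A.
      apply/subsetP=> x; rewrite !inE => /or3P[/eqP->|/eqP->|/xab[] //]; by [].
    have /eA {}eA : a |: (b |: B) != set0 by apply/set0Pn; exists a; rewrite !inE eqxx.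
    have {}eA : a |: (b |: B) = A.
      apply: eA; apply/closedP => x; rewrite !inE => /or3P[/eqP->|/eqP->|xB].
      - by rewrite sa ta cB eqxx !orbT.
      - by rewrite sb tb dBc cB eqxx !orbT.
      - have [e1 e2] := clst x xB; rewrite e1; have [h1 h2] := cl x xB; rewrite h1 !orbT; split=> //.
        case: (eqVneq x c) => [xc|xc]; first by rewrite xc tc eqxx.
        case: (eqVneq x d) => [xd|xd]; first by rewrite xd td eqxx orbT.
        by rewrite e2 // h2 !orbT.
    apply/setP=> y; rewrite -eA !inE.
    case: (eqVneq y a) => [->|ya]; first by rewrite (negbTE aB) /= ?andbF.
    case: (eqVneq y b) => [->|yb]; first by rewrite (negbTE bB) /= ?andbF.
    by [].
  have dB : d \notin B by rewrite dBc cB.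
  have eA : B = A.
    apply: H => //; first by apply/subsetP=> x /xab[].
    apply/closedP=> x xB; have [e1 e2] := clst x xB; have [h1 h2] := cl x xB.
    rewrite e1 e2 //; first by apply: contraTneq xB => ->; rewrite cB.
    by apply: contraTneq xB => ->.
  by move: aB; rewrite eA aA.
-
  have xA x : x \in B -> x \in A by move/(subsetP sB).
  have aBc : (a \in B) = (c \in B).
    apply/idP/idP=> h; first by rewrite -ta; case: (cl _ h).
    by rewrite -tc; case: (cl _ h).
  have bBa : (b \in B) = (a \in B).
    apply/idP/idP=> h; first by rewrite -sb; case: (cl _ h).
    by rewrite -sa; case: (cl _ h).
  have dBb : (d \in B) = (b \in B).
    apply/idP/idP=> h; first by rewrite -td; case: (cl _ h).
    by rewrite -tb; case: (cl _ h).
  have inA' x : x \in A :\ a :\ b = [&& x != b, x != a & x \in A] by rewrite !inE.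
  have eB : B :\ a :\ b = A :\ a :\ b.
    apply: H.
    - by apply/subsetP=> x; rewrite !inE => /and3P[-> -> /xA ->].
    - case/set0Pn: nB => y yB; apply/set0Pn.
      case: (eqVneq y a) => [ya|ya].
        by exists c; rewrite !inE cb ca -aBc -ya yB.
      case: (eqVneq y b) => [yb|yb].
        by exists c; rewrite !inE cb ca -aBc -bBa -yb yB.
      by exists y; rewrite !inE ya yb yB.
    apply/closedP=> x; rewrite !inE => /and3P[xb xa xB].
    have xA' : x \in A :\ a :\ b by rewrite !inE xb xa (xA _ xB).
    have h1 := inv_on_in x sA'; have h2 := inv_on_in x tA'.
    rewrite xA' !inE in h1 h2.
    move/and3P: h1 => [-> -> _]; move/and3P: h2 => [-> -> _] /=.
    have [hs ht] := cl x xB.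
    split; first by rewrite s'x.
    case: (eqVneq x c) => [e|xc]; first by rewrite e t'c dBb bBa aBc -e.
    case: (eqVneq x d) => [e|xd]; first by rewrite e t'd -aBc -bBa -dBb -e.
    by rewrite t'x.
  have cB : c \in B by move: cA'; rewrite -eB !inE => /and3P[].
  apply/setP=> y; apply/idP/idP; first exact: xA.
  case: (eqVneq y a) => [->|ya]; first by rewrite aBc.
  case: (eqVneq y b) => [->|yb]; first by rewrite bBa aBc.
  move=> yA; have : y \in A :\ a :\ b by rewrite !inE ya yb yA.
  by rewrite -eB !inE => /and3P[].
Qed.

End S4.


Section S5.
Variable T : finType.
Local Open Scope group_scope.
Implicit Types (A B : {set T}) (s t : {perm T}).

Definition FS A := [set s | inv_on A s].
Definition TPS A := [set st : {perm T} * {perm T} | [&& inv_on A st.1, inv_on A st.2 & conn A st.1 st.2]].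

Lemma key A s t a : inv_on A s -> inv_on A t -> a \in A -> t a != s a ->
  conn A s t = conn (A :\ a :\ s a) (s * tperm a (s a)) (tcon t a (s a)).
Proof.
move=> sA tA aA tab.
have [s1 s2 s3 s4] := contr_s sA aA.
have bA : s a \in A by rewrite (inv_on_in _ sA).
have ab : a != s a by rewrite eq_sym (inv_on_nfix sA).
have [t1 t2 t3 [t4 t5 t6 t7]] := contr_t tA aA bA ab tab.
by apply: (conn_contr sA tA s1 t1 aA erefl erefl erefl tab s2 s3 s4 t4 t5 t2 t6 t7).
Qed.

Lemma cardF_rec A a : a \in A -> #|FS A| = \sum_(b in A :\ a) #|FS (A :\ a :\ b)|.
Proof.
move=> aA; rewrite -sum1_card (partition_big (fun s => s a) (mem (A :\ a))) /=; last first.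
  move=> s; rewrite inE => sA; rewrite !inE (inv_on_in _ sA) aA andbT.
  exact: inv_on_nfix sA aA.
apply: eq_bigr => b; rewrite inE => /andP[ba bA]; rewrite sum1dep_card.
apply: (card_bij (f := fun s => s * tperm a b) (g := fun s => s * tperm a b)).
- move=> s; rewrite !inE => /andP[sA /eqP sab].
  by have [] := contr_s sA aA; rewrite sab.
- move=> s; rewrite !inE => sA.
  have ab : a != b by move: ba; rewrite inE eq_sym.
  have [h1 h2] := uncontr_s sA aA bA ab.
  by rewrite h1 h2 eqxx.
- by move=> s _; rewrite -mulgA tperm2 mulg1.
- by move=> s _; rewrite -mulgA tperm2 mulg1.
Qed.


Lemma cardTP_rec A a : a \in A -> #|TPS A| =
  \sum_(b in A :\ a) ((A :\ a :\ b == set0) + #|TPS (A :\ a :\ b)| * #|A :\ a :\ b|).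
Proof.
move=> aA; rewrite -sum1_card (partition_big (fun st : {perm T} * {perm T} => st.1 a) (mem (A :\ a))) /=; last first.
  move=> st; rewrite inE => /and3P[sA _ _]; rewrite !inE (inv_on_in _ sA) aA andbT.
  exact: inv_on_nfix sA aA.
apply: eq_bigr => b; rewrite inE => /andP[ba bA].
have ab : a != b by move: ba; rewrite inE eq_sym.
rewrite (bigID (fun st : {perm T} * {perm T} => st.2 a == b)) /=; congr (_ + _).
  rewrite sum1dep_card.
  case: (eqVneq (A :\ a :\ b) set0) => [E|NE].
    have Aab x : (x \in A) = (x == a) || (x == b).
      apply/idP/idP => [xA|/orP[]/eqP->//].
      apply/negPn/negP; rewrite negb_or => /andP[xa xb].
      have : x \in A :\ a :\ b by rewrite !inE xa xb xA.
      by rewrite E inE.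
    have inv_tp : inv_on A (tperm a b).
      apply/inv_onP; split=> x; first exact: tpermK.
      rewrite Aab; case: tpermP => [->|->|/eqP xa /eqP xb]; last by rewrite eqxx (negbTE xa) (negbTE xb).
        by rewrite eq_sym (negbTE ab) eqxx.
      by rewrite eqxx orbT (negbTE ab).
    have conn_tp : conn A (tperm a b) (tperm a b).
      apply/connP=> B sB /set0Pn[y yB] /closedP cl.
      have aB : a \in B.
        move: (subsetP sB y yB); rewrite Aab => /orP[]/eqP e; first by rewrite -e.
        by have [] := cl y yB; rewrite e tpermR.
      have bB : b \in B by have [] := cl a aB; rewrite tpermL.
      apply/eqP; rewrite eqEsubset sB; apply/subsetP=> x; rewrite Aab => /orP[]/eqP->//.
    have uq s : inv_on A s -> s a = b -> s = tperm a b.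
      move=> sA sab; apply/permP=> x.
      case: (eqVneq x a) => [->|xa]; first by rewrite sab tpermL.
      case: (eqVneq x b) => [->|xb]; first by rewrite -sab (inv_onP _ _ sA).1 tpermR.
      rewrite tpermD 1?eq_sym //; apply: (inv_on_fix sA).
      by rewrite Aab negb_or xa xb.
    rewrite (_ : [set x | _] = [set (tperm a b, tperm a b)]) ?cards1 //.
    apply/setP => [[s t]]; rewrite !inE /=; apply/idP/idP.
      move=> /andP[/andP[/and3P[sA tA _] /eqP sab] /eqP tab].
      by rewrite (uq _ sA sab) (uq _ tA tab).
    by move=> /eqP [-> ->]; rewrite inv_tp conn_tp tpermL eqxx.
  apply/eqP; rewrite cards_eq0; apply/eqP/setP => [[s t]]; rewrite !inE /=.
  apply/negP => /andP[/andP[/and3P[sA tA /connP cst] /eqP sab] /eqP tab].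
  have e := cst [set a; b].
  have sb : s b = a by rewrite -sab (inv_onP _ _ sA).1.
  have tb : t b = a by rewrite -tab (inv_onP _ _ tA).1.
  have eA : [set a; b] = A.
    apply: e.
    - by apply/subsetP=> x; rewrite !inE => /orP[]/eqP->.
    - by apply/set0Pn; exists a; rewrite !inE eqxx.
    by apply/closedP=> x; rewrite !inE => /orP[]/eqP->; rewrite ?sab ?sb ?tab ?tb eqxx ?orbT.
  case/set0Pn: NE => x; rewrite -eA !inE => /and3P[xb xa /orP[]] /eqP e'.
    by rewrite e' eqxx in xa.
  by rewrite e' eqxx in xb.
rewrite sum1dep_card -cardsX.
apply: (card_bij (f := fun st : {perm T} * {perm T} => ((st.1 * tperm a b, tcon st.2 a b), st.2 a))
                 (g := fun y : {perm T} * {perm T} * T => (y.1.1 * tperm a b, tun y.1.2 a b y.2))).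
- case=> s t; rewrite !inE /= => /andP[/andP[/and3P[sA tA cst] /eqP sab] tab].
  have [s1 _ _ _] := contr_s sA aA; rewrite sab in s1.
  have [t1 _ t3 _] := contr_t tA aA bA ab tab.
  move: t3; rewrite !inE => /and3P[-> -> ->]; rewrite s1 t1 /= andbT.
  by rewrite -sab -(key sA tA aA) // sab.
- case=> [[s t] c]; rewrite in_setX /= => /andP[]; rewrite inE => /and3P[sA tA cst] cA.
  have [h1 h2] := uncontr_s sA aA bA ab.
  have [k1 k2 k3 k4] := uncontr_t tA aA bA ab cA.
  rewrite !inE /= h1 k1 h2 k2 eqxx k4 /= andbT.
  rewrite (key h1 k1 aA); last by rewrite h2 k2.
  by rewrite /= in h2 k2 k3 *; rewrite andbT h2 -mulgA tperm2 mulg1 tcon_tun // k2.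
- case=> s t; rewrite !inE /= => /andP[/andP[/and3P[sA tA cst] /eqP sab] tab].
  have [_ t2 _ _] := contr_t tA aA bA ab tab.
  by rewrite /= -mulgA tperm2 mulg1 tun_tcon.
- case=> [[s t] c]; rewrite in_setX /= => /andP[]; rewrite inE => /and3P[sA tA cst] cA.
  have [k1 k2 k3 k4] := uncontr_t tA aA bA ab cA.
  by rewrite -mulgA tperm2 mulg1 tcon_tun // k2.
Qed.

End S5.


Fixpoint ff n := match n with 0 => 1 | 1 => 0 | m.+2 => m.+1 * ff m end.
Fixpoint tt n := match n with 0 => 1 | 1 => 0 | m.+2 => m.+1 * ((m == 0) + tt m * m) end.

Section S6.
Variable T : finType.
Local Open Scope group_scope.
Implicit Types (A B : {set T}) (s t : {perm T}).

Lemma inv_on0 s : inv_on set0 s = (s == 1).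
Proof.
apply/idP/idP.
  case/inv_onP=> _ sf; apply/eqP/permP=> x; rewrite perm1; apply/eqP.
  by rewrite sf inE.
by move/eqP->; apply/inv_onP; split=> x; rewrite !perm1 // eqxx inE.
Qed.

Lemma card_rem2 A a b n : a \in A -> b \in A :\ a -> #|A| = n.+1 -> #|A :\ a :\ b| = n.-1.
Proof.
move=> aA bA cA; have := cardsD1 a A; rewrite aA cA add1n => -[e1].
by have := cardsD1 b (A :\ a); rewrite bA -e1 add1n => ->.
Qed.

Lemma cardFS n : forall A, #|A| = n -> #|FS A| = ff n.
Proof.
elim/ltn_ind: n => n IH A cA.
case: n IH cA => [|n] IH cA.
  move/cards0_eq: cA => ->.
  rewrite (_ : FS set0 = [set 1]) ?cards1 //.
  by apply/setP=> s; rewrite !inE inv_on0.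
have /set0Pn[a aA] : A != set0 by rewrite -card_gt0 cA.
rewrite (cardF_rec aA).
rewrite (eq_bigr (fun _ => ff n.-1)); last first.
  move=> b bA; apply: IH; [by case: (n) | exact: card_rem2 aA bA cA].
rewrite sum_nat_const.
have := cardsD1 a A; rewrite aA cA add1n => -[<-].
by case: n {IH cA}.
Qed.

Lemma cardTPS n : forall A, #|A| = n -> #|TPS A| = tt n.
Proof.
elim/ltn_ind: n => n IH A cA.
case: n IH cA => [|n] IH cA.
  move/cards0_eq: cA => ->.
  rewrite (_ : TPS set0 = [set (1, 1)]) ?cards1 //.
  apply/setP=> [[s t]]; rewrite !inE /= !inv_on0 xpair_eqE.
  case: (s == 1) (t == 1) => [] [] //=.
  by apply/connP=> B; rewrite subset0 => /eqP ->; rewrite eqxx.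
have /set0Pn[a aA] : A != set0 by rewrite -card_gt0 cA.
rewrite (cardTP_rec aA).
rewrite (eq_bigr (fun _ => (n.-1 == 0) + tt n.-1 * n.-1)); last first.
  move=> b bA; rewrite (IH n.-1) //; last exact: card_rem2 aA bA cA.
  by rewrite -cards_eq0 (card_rem2 aA bA cA).
  by case: n {IH cA}.
rewrite sum_nat_const.
have := cardsD1 a A; rewrite aA cA add1n => -[<-].
by case: n {IH cA}.
Qed.

End S6.

Lemma fpf_inv k (s : 'S_(k.*2)) : fpf_involution s = inv_on setT s.
Proof.
rewrite /fpf_involution; apply/idP/idP.
  case/andP=> /eqP ss /forallP sf; apply/inv_onP; split=> x.
    by rewrite -permM ss perm1.
  by rewrite inE (negbTE (sf x)).
case/inv_onP=> ss sf; apply/andP; split.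
  by apply/eqP/permP=> x; rewrite permM perm1 ss.
by apply/forallP=> x; rewrite sf inE.
Qed.

Lemma fpf_pairsE k : fpf_pairs k = setX (FS setT) (FS setT).
Proof. by apply/setP=> [[s t]]; rewrite !inE /= !fpf_inv. Qed.

Lemma trans_pairsE k : (0 < k)%N -> transitive_fpf_pairs k = TPS setT.
Proof.
move=> k0; have x0 : 'I_(k.*2) by exists 0; rewrite double_gt0.
apply/setP=> [[s t]]; rewrite !inE /= !fpf_inv.
case sA: (inv_on setT s); case tA: (inv_on setT t) => //=.
exact: (trans_conn x0 (inv_onP _ _ sA).1 (inv_onP _ _ tA).1).
Qed.


Lemma ff_rec k : ff (k.+1).*2 = (k.*2).+1 * ff k.*2.
Proof. by rewrite doubleS. Qed.

Lemma tt_rec k : 0 < k -> tt (k.+1).*2 = (k.*2).+1 * (tt k.*2 * k.*2).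
Proof. by move=> k0; rewrite doubleS /= (_ : (k.*2 == 0) = false) //; case: k k0. Qed.

Lemma ff_pos k : 0 < ff k.*2.
Proof. by elim: k => // k IH; rewrite ff_rec muln_gt0. Qed.

Lemma bounds k : 0 < k ->
  (tt k.*2 ^ 2 * k <= ff k.*2 ^ 4) && (ff k.*2 ^ 4 <= tt k.*2 ^ 2 * (k.*2).-1).
Proof.
elim: k => // k IH _.
case: k IH => [|k] IH; first by [].
have /andP[u l] := IH isT.
rewrite ff_rec tt_rec //.
move: u l; rewrite -!muln2.
set n := tt _; set f := ff _; move: n f => n f u l.
apply/andP; split.
  have h1 : 4 * k.+1 * k.+2 <= (k.+1 * 2).+1 ^ 2 by nia.
  have e1 : ((k.+1 * 2).+1 * (n * (k.+1 * 2))) ^ 2 * k.+2 = ((k.+1 * 2).+1 ^ 2) * ((4 * k.+1 * k.+2) * (n ^ 2 * k.+1)) by ring.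
  have e2 : ((k.+1 * 2).+1 * f) ^ 4 = ((k.+1 * 2).+1 ^ 2) * ((k.+1 * 2).+1 ^ 2 * f ^ 4) by ring.
  rewrite e1 e2 leq_mul2l; apply: leq_trans (leq_mul (leqnn _) u) _.
  by rewrite leq_mul2r h1 orbT.
have h1 : (k.+1 * 2).+1 * (k.+1 * 2).-1 <= (k.+1 * 2) ^ 2 by nia.
have e1 : ((k.+1 * 2).+1 * (n * (k.+1 * 2))) ^ 2 * (k.+2 * 2).-1 = ((k.+1 * 2).+1 ^ 3) * ((k.+1 * 2) ^ 2 * n ^ 2) by nia.
have e2 : ((k.+1 * 2).+1 * f) ^ 4 = ((k.+1 * 2).+1 ^ 3) * ((k.+1 * 2).+1 * f ^ 4) by ring.
rewrite e1 e2 leq_mul2l; apply/orP; right.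
apply: leq_trans (leq_mul (leqnn _) l) _.
by rewrite mulnCA [_ ^ 2 * n ^ 2]mulnC leq_mul2l h1 orbT.
Qed.

Import Order.TTheory GRing.Theory Num.Theory.
Local Open Scope ring_scope.


Lemma real_bounds (R : rcfType) (N D k r : R) : 0 < D -> 0 < r -> r ^+ 2 = k ->
  N ^+ 2 * k <= D ^+ 2 -> D ^+ 2 <= 2 * (N ^+ 2 * k) -> 0 <= N ->
  (1 / 2) / r <= N / D /\ N / D <= 1 / r.
Proof.
move=> D0 r0 rk U L N0.
set x := N / D.
have xD : x * D = N by rewrite /x mulfVK // gt_eqF.
have x0 : 0 <= x by rewrite /x divr_ge0 // ltW.
set y := x * r.
have y0 : 0 <= y by rewrite /y mulr_ge0 // ltW.
have key : y ^+ 2 * D ^+ 2 = N ^+ 2 * k by rewrite /y -rk -xD; ring.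
have D2 : 0 < D ^+ 2 by rewrite exprn_gt0.
have y1 : y ^+ 2 <= 1.
  by rewrite -(ler_pM2r D2) mul1r key.
have y2 : 1 <= 2 * y ^+ 2.
  by rewrite -(ler_pM2r D2) mul1r -mulrA key.
split.
  rewrite ler_pdivrMr //; rewrite -/y; nra.
rewrite ler_pdivlMr //; rewrite -/y; nra.
Qed.

Theorem lemma2p1 (R : rcfType) :
  exists a b : R, 0 < a /\ a < b /\
    forall k : nat, (1 <= k)%N ->
      a / Num.sqrt (k%:R) <= p_trans R k /\ p_trans R k <= b / Num.sqrt (k%:R).
Proof.
exists (1 / 2), 1; split; first lra.
split; first lra.
move=> k k1.
have pE : p_trans R k = (tt k.*2)%:R / (ff k.*2 * ff k.*2)%:R.
  rewrite /p_trans trans_pairsE // fpf_pairsE cardsX.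
  by rewrite (cardTPS (n := k.*2)) ?(cardFS (n := k.*2)) // cardsT card_ord.
have /andP[u l] := bounds k1.
rewrite pE; apply: real_bounds.
- by rewrite ltr0n muln_gt0 ff_pos.
- by rewrite sqrtr_gt0 ltr0n.
- by rewrite sqr_sqrtr // ler0n.
- rewrite -!natrX -natrM ler_nat; apply: leq_trans u _.
  by rewrite expnMn -expnD.
- apply: (le_trans (y := ((tt k.*2 ^ 2 * k.*2)%N)%:R)).
    rewrite -natrX ler_nat expnMn -expnD; apply: leq_trans l _.
    by rewrite leq_mul2l leq_pred orbT.
  rewrite natrM natrX -muln2 natrM; nra.
- by rewrite ler0n.
Qed.
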